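(* Let $n\ge 2$ and let $X\subset\mathbb{P}^n$ be a hypersurface over $\mathbb{F}_q$ that contains at least one $\mathbb{F}_q$-point at which $X$ is smooth and satisfies $\#X(\mathbb{F}_q)\geq \#\mathbb{P}^n(\mathbb{F}_q)-1$. Then $\deg(X)\geq q+1$. *)

(* Defs.v *)
From mathcomp Require Import all_boot all_order all_algebra all_field.
From mathcomp Require Import mpoly.
Set Implicit Arguments. Unset Strict Implicit. Unset Printing Implicit Defensive.
Import GRing.Theory.
Local Open Scope ring_scope.

(* Points of P^n(K) (n+1 homogeneous coordinates x_0..x_n) are represented by
   their unique normalized representative: the first nonzero coordinate is 1. *)
Definition normalized (K : fieldType) (N : nat) (v : {ffun 'I_N -> K}) : bool :=
  [exists i : 'I_N, (v i == 1) && [forall j : 'I_N, (j < i)%N ==> (v j == 0)]].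

Definition proj_points (K : finFieldType) (N : nat) : {set {ffun 'I_N -> K}} :=
  [set v | normalized v].

Definition homog_of_deg (K : fieldType) (N d : nat) (F : {mpoly K[N]}) : bool :=
  F \is ishomog1 d mdeg.

Definition hyp_points (K : finFieldType) (N : nat) (F : {mpoly K[N]})
  : {set {ffun 'I_N -> K}} :=
  [set v in proj_points K N | F.@[v] == 0].

Definition smooth_point (K : finFieldType) (N : nat) (F : {mpoly K[N]})
  (v : {ffun 'I_N -> K}) : bool :=
  (v \in hyp_points F) && [exists i : 'I_N, (mderiv i F).@[v] != 0].

(* Main.v *)
Require Import Defs.
From mathcomp Require Import all_boot all_order all_algebra all_field.
From mathcomp Require Import mpoly.
From mathcomp Require Import ring zify.
Set Implicit Arguments. Unset Strict Implicit. Unset Printing Implicit Defensive.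
Import GRing.Theory.
Local Open Scope ring_scope.

Lemma mpoly_ring_ind (K : comNzRingType) N (Pr : {mpoly K[N]} -> Prop) :
  (forall c, Pr c%:MP) -> (forall i, Pr 'X_i) ->
  (forall p q, Pr p -> Pr q -> Pr (p + q)) ->
  (forall p q, Pr p -> Pr q -> Pr (p * q)) -> forall p, Pr p.
Proof.
move=> hC hX hD hM p; rewrite [p]mpolyE.
have h0 : Pr 0 by have := hC 0; rewrite mpolyC0.
have h1 : Pr 1 by have := hC 1; rewrite mpolyC1.
apply: big_ind => // m Hm.
rewrite -mul_mpolyC; apply: (hM); first exact: hC.
rewrite mpolyXE_id; apply: (big_ind Pr) => // i Hi.
elim: (m i) => [|k IH]; first by rewrite expr0.
by rewrite exprS; apply: (hM).
Qed.

Definition Gp (K : fieldType) N (P R : 'I_N -> K) (p : {mpoly K[N]}) : {poly K} :=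
  mmap (@polyC K) (fun i => (P i)%:P + R i *: 'X) p.

Definition Dp (K : fieldType) N (P R : 'I_N -> K) (p : {mpoly K[N]}) : K :=
  \sum_i R i * (mderiv i p).@[P].

Lemma GpD (K : fieldType) N (P R : 'I_N -> K) p q : Gp P R (p + q) = Gp P R p + Gp P R q.
Proof. exact: mmapD. Qed.
Lemma GpM (K : fieldType) N (P R : 'I_N -> K) p q : Gp P R (p * q) = Gp P R p * Gp P R q.
Proof. exact: rmorphM. Qed.
Lemma GpC (K : fieldType) N (P R : 'I_N -> K) c : Gp P R c%:MP = c%:P.
Proof. exact: mmapC. Qed.
Lemma GpX (K : fieldType) N (P R : 'I_N -> K) i : Gp P R 'X_i = (P i)%:P + R i *: 'X.
Proof.
rewrite /Gp mmapX /mmap1 (bigD1 i) //= mnm1E eqxx expr1 big1 ?mulr1 // => j /negbTE ji.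
by rewrite mnm1E eq_sym ji expr0.
Qed.

Lemma Gp_good (K : fieldType) N (P R : 'I_N -> K) p :
  [/\ (Gp P R p)`_0 = p.@[P], (Gp P R p)`_1 = Dp P R p &
      forall t, (Gp P R p).[t] = p.@[fun i => P i + t * R i]].
Proof.
elim/mpoly_ring_ind: p.
- move=> c; rewrite GpC mevalC /Dp coefC coefC /= big1; last first.
    by move=> i _; rewrite mderivC meval0 mulr0.
  by split => // t; rewrite hornerC mevalC.
- move=> i; rewrite GpX mevalXU !coefD !coefZ !coefC !coefX /= mulr0 mulr1 addr0 add0r.
  split => //.
  + rewrite /Dp (bigD1 i) //= big1 ?addr0.
      rewrite mderivX mnm1E eqxx mevalZ mevalX big1 ?mulr1 //.
      by move=> j _; rewrite mnmBE subnn expr0.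
    move=> j /negbTE ji; rewrite mderivX mnm1E eq_sym ji /= mulr0n scale0r meval0 mulr0 //.
  + by move=> t; rewrite hornerD hornerC hornerZ hornerX mevalXU mulrC.
- move=> p q [h0 h1 ht] [k0 k1 kt]; rewrite GpD !coefD h0 k0 h1 k1 mevalD; split => //.
    by rewrite /Dp -big_split /=; apply: eq_bigr => i _; rewrite mderivD mevalD mulrDr.
  by move=> t; rewrite hornerD ht kt mevalD.
- move=> p q [h0 h1 ht] [k0 k1 kt]; rewrite GpM !coefM !big_ord_recl !big_ord0 /=.

  rewrite mevalM; split.
  - by rewrite subnn addr0 h0 k0.
  - rewrite /bump /= subn0 subnn !addr0 h0 h1 k0 k1.
    rewrite /Dp mulr_sumr mulr_suml -big_split /=; apply: eq_bigr => i _.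
    rewrite mderivM mevalD !mevalM.
    ring.
  - by move=> t; rewrite hornerM ht kt mevalM.
Qed.
Lemma size_sum_le (K : fieldType) (x y : {poly K}) k :
  (size x <= k)%N -> (size y <= k)%N -> (size (x + y)%R <= k)%N.
Proof.
move=> hx hy; apply: (leq_trans (size_polyD x y)); by rewrite geq_max hx hy.
Qed.

Lemma size_mul_le (K : fieldType) (x y : {poly K}) k l :
  (size x <= k)%N -> (size y <= l.+1)%N -> (size (x * y)%R <= k + l)%N.
Proof.
move=> hx hy; apply: (leq_trans (size_polyMleq x y)).
have := leq_add hx hy; lia.
Qed.

Lemma size_sX (K : fieldType) (a : K) k : (size (a *: 'X^k : {poly K}) <= k.+1)%N.
Proof. by apply: (leq_trans (size_scale_leq _ _)); rewrite size_polyXn. Qed.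

Lemma hom_mul (K : fieldType) (g1 g2 : {poly K}) a b k l :
  (size (g1 - a *: 'X^k)%R <= k)%N -> (size (g2 - b *: 'X^l)%R <= l)%N ->
  (size (g1 * g2 - (a * b) *: 'X^(k + l)%N)%R <= k + l)%N.
Proof.
set A := g1 - _; set B := g2 - _ => hA hB.
have e : (a *: 'X^k) * (b *: 'X^l) = (a * b) *: 'X^(k + l)%N :> {poly K}.
  by rewrite -scalerAl -scalerAr scalerA exprD.
have -> : g1 * g2 - (a * b) *: 'X^(k + l)%N =
   A * B + A * (b *: 'X^l) + (a *: 'X^k) * B.
  rewrite /A /B -e; ring.
apply: size_sum_le; [apply: size_sum_le|].
- by apply: size_mul_le hA _; apply: leq_trans hB _.
- by apply: size_mul_le hA (size_sX _ _).
- by rewrite addnC; rewrite mulrC; apply: size_mul_le hB (size_sX _ _).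
Qed.

Definition Hom (K : fieldType) N (P R : 'I_N -> K) k (q : {mpoly K[N]}) :=
  (size (Gp P R q - q.@[R] *: 'X^k)%R <= k)%N.

Lemma Hom_add (K : fieldType) N (P R : 'I_N -> K) k q1 q2 :
  Hom P R k q1 -> Hom P R k q2 -> Hom P R k (q1 + q2).
Proof.
rewrite /Hom GpD mevalD scalerDl => h1 h2.
have -> : Gp P R q1 + Gp P R q2 - (q1.@[R] *: 'X^k + q2.@[R] *: 'X^k) =
   (Gp P R q1 - q1.@[R] *: 'X^k) + (Gp P R q2 - q2.@[R] *: 'X^k) by ring.
exact: size_sum_le.
Qed.

Lemma Hom_mul (K : fieldType) N (P R : 'I_N -> K) k l q1 q2 :
  Hom P R k q1 -> Hom P R l q2 -> Hom P R (k + l) (q1 * q2).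
Proof. by rewrite /Hom GpM mevalM; apply: hom_mul. Qed.

Lemma Hom_C (K : fieldType) N (P R : 'I_N -> K) c : Hom P R 0 c%:MP.
Proof. by rewrite /Hom GpC mevalC expr0 alg_polyC subrr size_poly0. Qed.

Lemma Hom_X (K : fieldType) N (P R : 'I_N -> K) i : Hom P R 1 'X_i.
Proof.
rewrite /Hom GpX mevalXU expr1 addrK.
exact: size_polyC_leq1.
Qed.

Lemma Gp_hom (K : fieldType) N (P R : 'I_N -> K) k p :
  p \is ishomog1 k mdeg -> Hom P R k p.
Proof.
move=> /dhomogP hp; rewrite [p]mpolyE big_seq.
apply: (big_ind (Hom P R k)).
- by rewrite /Hom /Gp mmap0 meval0 scale0r subr0 size_poly0.
- exact: Hom_add.
move=> m /hp hm; have hm2 : mdeg m = k := hm; rewrite -hm2 -mul_mpolyC -[mdeg m]add0n; apply: Hom_mul; first exact: Hom_C.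
rewrite mpolyXE_id mdegE.
apply: (big_ind2 (fun q k => Hom P R k q)).
- by have := Hom_C P R 1; rewrite mpolyC1.
- by move=> q1 q2 k1 k2; apply: Hom_mul.
move=> i _; elim: (m i) => [|j IH]; first by rewrite expr0; have := Hom_C P R 1; rewrite mpolyC1.
by rewrite exprS -add1n; apply: Hom_mul => //; exact: Hom_X.
Qed.

Lemma line_bound (K : finFieldType) N (P R : 'I_N -> K) d (F : {mpoly K[N]}) :
  F \is ishomog1 d mdeg -> F.@[R] = 0 ->
  (forall t, F.@[fun i => P i + t * R i] = 0) -> Dp P R F != 0 -> (#|K| < d)%N.
Proof.
move=> hF hR ht hD.
have [_ h1 hG] := Gp_good P R F.
have Gnz : Gp P R F != 0 by apply: contraNneq hD => e; rewrite -h1 e coef0.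
have hs : (size (Gp P R F) <= d)%N.
  by have := Gp_hom P R hF; rewrite /Hom hR scale0r subr0.
have hr : all (root (Gp P R F)) (enum K).
  by apply/allP => t _; rewrite /root hG ht.
have := max_poly_roots Gnz hr (enum_uniq _).
rewrite -cardE => h; exact: leq_trans h hs.
Qed.

Lemma homog_eval (K : fieldType) N d (F : {mpoly K[N]}) (c : K) (u : 'I_N -> K) :
  F \is ishomog1 d mdeg -> F.@[fun i => c * u i] = c ^+ d * F.@[u].
Proof.
move=> /dhomogP hF; rewrite !mevalE mulr_sumr big_seq [RHS]big_seq.
apply: eq_bigr => m /hF hm; have hm2 : mdeg m = d := hm.
rewrite mulrCA; congr (_ * _).
under eq_bigr do rewrite exprMn.
by rewrite big_split /= prodrXr -mdegE hm2.
Qed.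

Lemma normalize (K : finFieldType) N (w : 'I_N -> K) i0 : w i0 != 0 ->
  exists c (u : {ffun 'I_N -> K}),
    [/\ c != 0, u \in proj_points K N & forall i, w i = c * u i].
Proof.
move=> h0.
case: (@arg_minnP _ i0 (fun i => w i != 0) (fun i : 'I_N => val i) h0) => k hk hmin.
exists (w k), [ffun j => w j / w k]; split => //.
- rewrite inE /normalized; apply/existsP; exists k; rewrite ffunE divff // eqxx /=.
  apply/forallP => j; apply/implyP => hj; rewrite ffunE.
  case: (eqVneq (w j) 0) => [->|hwj]; first by rewrite mul0r.
  by have := hmin j hwj; rewrite leqNgt hj.
- by move=> i; rewrite ffunE mulrC divfK.
Qed.

Lemma at_most_one (K : finFieldType) N (F : {mpoly K[N]}) u1 u2 :
  (#|proj_points K N| - 1 <= #|hyp_points F|)%N ->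
  u1 \in proj_points K N -> u2 \in proj_points K N ->
  F.@[u1] != 0 -> F.@[u2] != 0 -> u1 = u2.
Proof.
move=> hc h1 h2 f1 f2; apply/eqP; apply/negPn/negP => ne.
have h1' : normalized u1 by rewrite inE in h1.
have h2' : normalized u2 by rewrite inE in h2.
have sub : hyp_points F :|: [set u1; u2] \subset proj_points K N.
  apply/subsetP => z; rewrite /hyp_points !inE => /orP[/andP[-> _]//|/orP[]/eqP->//].
have e0 : hyp_points F :&: [set u1; u2] = set0.
  apply/setP => z; rewrite /hyp_points !inE; apply/negbTE/negP.
  move=> /andP[/andP[_ /eqP fx] /orP[]/eqP ex]; rewrite ex in fx.
  - by rewrite fx eqxx in f1.
  - by rewrite fx eqxx in f2.
have := subset_leq_card sub; rewrite cardsU cards2 ne e0 cards0 subn0 /= => h.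
have h' : (#|hyp_points F| + 2 <= #|proj_points K N|)%N := h.
lia.
Qed.

Lemma F_zero (K : fieldType) N d (F : {mpoly K[N]}) (w : 'I_N -> K) :
  (0 < d)%N -> F \is ishomog1 d mdeg -> (forall i, w i = 0) -> F.@[w] = 0.
Proof.
move=> d0 hF hw.
rewrite (@meval_eq _ _ w (fun i => 0 * w i)); last by move=> i; rewrite hw mulr0.
by rewrite (homog_eval 0 w hF) expr0n; case: d d0 hF => // d' _ _; rewrite mul0r.
Qed.

Lemma bad_prop (K : finFieldType) N d (F : {mpoly K[N]}) (w1 w2 : 'I_N -> K) :
  (0 < d)%N -> F \is ishomog1 d mdeg ->
  (#|proj_points K N| - 1 <= #|hyp_points F|)%N ->
  F.@[w1] != 0 -> F.@[w2] != 0 -> exists c, forall i, w1 i = c * w2 i.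
Proof.
move=> d0 hF hc.
have nz : forall w, F.@[w] != 0 -> exists c (u : {ffun 'I_N -> K}),
    [/\ c != 0, u \in proj_points K N, F.@[u] != 0 & forall i, w i = c * u i].
  move=> w hw; case: (pickP (fun i => w i != 0)) => [i hi|none]; last first.
    by rewrite (F_zero d0 hF) ?eqxx in hw => // i; have := none i => /= /negbFE/eqP.
  have [c [u [c0 hu e]]] := normalize hi.
  exists c, u; split => //.
  move: hw; rewrite (@meval_eq _ _ w (fun i => c * u i)) // (homog_eval c u hF).
  by apply: contraNneq => ->; rewrite mulr0.
move=> /nz [c1 [u1 [c10 hu1 f1 e1]]] /nz [c2 [u2 [c20 hu2 f2 e2]]].
have eu := at_most_one hc hu1 hu2 f1 f2; subst u2.
exists (c1 / c2) => i; rewrite e1 e2 mulrA divfK //.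
Qed.

Lemma three_idx n (i0 : 'I_n.+1) : (2 <= n)%N ->
  exists j1 j2 : 'I_n.+1, [/\ j1 != i0, j2 != i0 & j1 != j2].
Proof.
move=> hn.
have ne : forall a b, (a <= n)%N -> (b <= n)%N -> a != b -> (inord a : 'I_n.+1) != inord b.
  move=> a b ha hb; apply: contra => /eqP/(congr1 val) /=; rewrite !inordK // => ->.
  by [].
case: (eqVneq i0 (inord 0)) => [->|n0].
  exists (inord 1), (inord 2); split; apply: ne => //; lia.
case: (eqVneq i0 (inord 1)) => [->|n1].
  exists (inord 0), (inord 2); split; apply: ne => //; lia.
exists (inord 0), (inord 1); split; rewrite 1?eq_sym //; apply: ne => //; lia.
Qed.

Unset Implicit Arguments.
Theorem lemma2p7 (K : finFieldType) (n d : nat) (F : {mpoly K[n.+1]}) :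
  (2 <= n)%N ->
  F != 0%R -> (0 < d)%N -> homog_of_deg d F ->
  (exists v, smooth_point F v) ->
  (#|proj_points K n.+1| - 1 <= #|hyp_points F|)%N ->
  (#|K|.+1 <= d)%N.
Proof.
move=> hn Fnz d0 hF [v /andP[hv /existsP[i0 hi0]]] hc.
have hPv : F.@[v] = 0 by move: hv; rewrite /hyp_points inE => /andP[_ /eqP].
case: (ltnP #|K| d) => // hle; exfalso.
have key : forall R : 'I_n.+1 -> K, Dp v R F != 0 ->
    exists a b, b != 0 /\ F.@[fun i => a * v i + b * R i] != 0.
  move=> R hD.
  case: (boolP [exists a : K, exists b : K,
      (b != 0) && (F.@[fun i => a * v i + b * R i] != 0)]).
    by move=> /existsP[a /existsP[b /andP[hb hf]]]; exists a, b.
  move=> /negP hno; exfalso.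
  have H0 : forall a b, b != 0 -> F.@[fun i => a * v i + b * R i] = 0.
    move=> a b hb; apply/eqP; apply/negPn/negP => hf; apply: hno.
    by apply/existsP; exists a; apply/existsP; exists b; rewrite hb hf.
  have hR : F.@[R] = 0.
    rewrite -(H0 0 1 (oner_neq0 _)); apply: meval_eq => i.
    by rewrite mul0r add0r mul1r.
  have ht : forall t, F.@[fun i => v i + t * R i] = 0.
    move=> t; case: (eqVneq t 0) => [->|t0].
      by rewrite -[RHS]hPv; apply: meval_eq => i; rewrite mul0r addr0.
    by rewrite -(H0 1 t t0); apply: meval_eq => i; rewrite mul1r.
  by have := line_bound hF hR ht hD; rewrite ltnNge hle.
pose x := fun j : 'I_n.+1 => ((j == i0)%:R : K).
have hDx : Dp v x F != 0.
  rewrite /Dp (bigD1 i0) //= /x eqxx mul1r big1 ?addr0 // => j /negbTE ->.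
  by rewrite /= mulr0n mul0r.
have [a1 [b1 [hb1 hf1]]] := key x hDx.
have [j1 [j2 [hj1 hj2 hj12]]] := three_idx i0 hn.
have [js nsy] : exists js : 'I_n.+1,
    forall a b, ~ (forall i, ((i == js)%:R : K) = a * v i + b * x i).
  case: (eqVneq (v j2) 0) => [e|ne].
  - exists j2 => a b H; have := H j2.
    rewrite e eqxx /x (negbTE hj2) /= mulr0n !mulr0 addr0 => /eqP.
    by rewrite oner_eq0.
  - exists j1 => a b H; have := H j2.
    rewrite /x (negbTE hj2) eq_sym (negbTE hj12) /= mulr0n mulr0 addr0 => /esym/eqP.
    rewrite mulf_eq0 (negbTE ne) orbF => /eqP a0.
    have := H j1; rewrite a0 /x (negbTE hj1) eqxx /= mulr0n mul0r mulr0 addr0 => /eqP.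
    by rewrite oner_eq0.
pose y := fun j : 'I_n.+1 => ((j == js)%:R : K).
pose R := if Dp v y F != 0 then y else (fun i => x i + y i).
have hDR : Dp v R F != 0.
  rewrite /R; case: ifP => // /negbFE/eqP hy.
  have -> : Dp v (fun i => x i + y i) F = Dp v x F + Dp v y F.
    by rewrite /Dp -big_split; apply: eq_bigr => i _; rewrite mulrDl.
  by rewrite hy addr0.
have nsR : forall a b, ~ (forall i, R i = a * v i + b * x i).
  move=> a b; rewrite /R; case: ifP => _ H.
  - exact: (nsy a b H).
  - apply: (nsy a (b - 1)) => i; have /= e := H i.
    move: e; rewrite /y /x => e.
    rewrite -[((i == js)%:R : K)](addKr ((i == i0)%:R : K)) e; ring.
have [a2 [b2 [hb2 hf2]]] := key R hDR.
have [c hc'] := bad_prop d0 hF hc hf2 hf1.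
apply: (nsR ((c * a1 - a2) / b2) (c * b1 / b2)) => i.
have /= E := hc' i.
have E' : b2 * R i = c * (a1 * v i + b1 * x i) - a2 * v i by rewrite -E; ring.
transitivity ((b2 * R i) / b2); first by field.
by rewrite E'; field.
Qed.
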